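(* Let $n\ge 2$ and $2\le m\le n$ be integers and let $\alpha\in(0,2]$. Define the $n$-qubit observables $\mathcal{M}_Z=(|0\rangle\langle 0|)^{\otimes n}+(|1\rangle\langle 1|)^{\otimes n}$ and $\mathcal{M}_X=\sigma_x^{\otimes n}$, where $\sigma_x=|0\rangle\langle 1|+|1\rangle\langle 0|$, and let $\mathcal{W}^n_{se}(\alpha)=\alpha\mathcal{M}_Z+\mathcal{M}_X$. Then for every $m$-separable $n$-qubit state $\rho$, $$\operatorname{Tr}\big[\rho\,\mathcal{W}^n_{se}(\alpha)\big]\le \max\Big\{\alpha,\ \frac{\alpha}{2^{m-1}}+1\Big\}.$$
   Context: $\{|0\rangle,|1\rangle\}$ is the computational basis of $\mathbb{C}^2$. An $n$-qubit pure state $|\phi\rangle$ is $m$-separable if the $n$ qubits can be partitioned into $m$ nonempty disjoint subsets $\mathcal{G}_1,\dots,\mathcal{G}_m$ such that $|\phi\rangle=\bigotimes_{i=1}^m|\psi_{\mathcal{G}_i}\rangle$ with $|\psi_{\mathcal{G}_i}\rangle$ a pure state of the qubits in $\mathcal{G}_i$. A mixed $n$-qubit state $\rho$ is $m$-separable if it is a convex combination of projectors onto $m$-separable pure states (the partitions may differ between terms). *)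

(* Defs.v *)
From HB Require Import structures.
From mathcomp Require Import all_boot all_order all_algebra.
From mathcomp Require Import complex.
From mathcomp Require Import reals.
Set Implicit Arguments. Unset Strict Implicit. Unset Printing Implicit Defensive.
Import Order.TTheory GRing.Theory Num.Theory.
Local Open Scope ring_scope.

(* Computational basis of (C^2)^{\otimes n} is indexed by i : 'I_(2^n);
   qubit k of basis state i is the k-th binary digit of i. *)
Definition qbit (n : nat) (i : 'I_(2 ^ n)) (k : 'I_n) : bool := odd (i %/ 2 ^ k).

Section Qubits.
Variables (C : numClosedFieldType) (n : nat).

(* single-qubit matrices, entry (b, c) = <b| . |c> *)
Definition sigma_x (b c : bool) : C := (b != c)%:R.
Definition proj0 (b c : bool) : C := ((~~ b) && (~~ c))%:R.
Definition proj1 (b c : bool) : C := (b && c)%:R.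

(* entries of n-fold tensor products are products of entries *)
Definition MZ : 'M[C]_(2 ^ n) :=
  \matrix_(i, j) ((\prod_(k < n) proj0 (qbit i k) (qbit j k))
                + (\prod_(k < n) proj1 (qbit i k) (qbit j k))).
Definition MX : 'M[C]_(2 ^ n) :=
  \matrix_(i, j) (\prod_(k < n) sigma_x (qbit i k) (qbit j k)).
Definition Wse (alpha : C) : 'M[C]_(2 ^ n) := alpha *: MZ + MX.

Definition adj (p q : nat) (A : 'M[C]_(p, q)) : 'M[C]_(q, p) := (map_mx Num.conj A)^T.

Definition pure_state (psi : 'cV[C]_(2 ^ n)) : Prop :=
  \sum_(i < 2 ^ n) `|psi i 0| ^+ 2 = 1.

(* psi is m-separable: the qubits are partitioned into m nonempty groups
   (qubit k lies in group part k, every group nonempty) and psi is a tensor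
   product of states psi_g of the groups, i.e. its amplitude at basis state i
   is the product over g of an amplitude f g i depending only on the bits of
   i in group g. *)
Definition m_separable_pure (m : nat) (psi : 'cV[C]_(2 ^ n)) : Prop :=
  pure_state psi /\
  exists (part : 'I_n -> 'I_m) (f : 'I_m -> 'I_(2 ^ n) -> C),
    (forall g : 'I_m, exists k : 'I_n, part k = g) /\
    (forall (g : 'I_m) (i j : 'I_(2 ^ n)),
        (forall k : 'I_n, part k = g -> qbit i k = qbit j k) -> f g i = f g j) /\
    (forall i : 'I_(2 ^ n), psi i 0 = \prod_(g < m) f g i).

Definition m_separable (m : nat) (rho : 'M[C]_(2 ^ n)) : Prop :=
  exists (N : nat) (w : 'I_N -> C) (psi : 'I_N -> 'cV[C]_(2 ^ n)),
    (forall j, 0 <= w j) /\ \sum_(j < N) w j = 1 /\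
    (forall j, m_separable_pure m (psi j)) /\
    rho = \sum_(j < N) w j *: (psi j *m adj (psi j)).

End Qubits.

(* Main.v *)
Require Import Defs.
From HB Require Import structures.
From mathcomp Require Import all_boot all_order all_algebra.
From mathcomp Require Import complex.
From mathcomp Require Import reals.
From mathcomp Require Import ring lra.
Import Order.TTheory GRing.Theory Num.Theory.
Local Open Scope ring_scope.

Lemma step_ineq (R : realFieldType) (P Q Y T p q r : R) :
  0 <= p -> 0 <= q -> 0 <= r -> 0 <= P -> 0 <= Q ->
  2 * P * Q <= Y -> Y + (P - Q) ^+ 2 <= T ->
  Y * (r + 2 * p * q) + (P * p - Q * q) ^+ 2 <= T * (p ^+ 2 + q ^+ 2 + r).
Proof.
move=> p0 q0 r0 P0 Q0 hY hT.
have e : T * (p ^+ 2 + q ^+ 2 + r) - (Y * (r + 2 * p * q) + (P * p - Q * q) ^+ 2)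
  = (T - Y - (P - Q) ^+ 2) * (p ^+ 2 + q ^+ 2 + r) + (Y - 2 * P * Q) * (p - q) ^+ 2
    + (P - Q) ^+ 2 * r + (P * q - Q * p) ^+ 2 by ring.
rewrite -subr_ge0 e.
have h1 : 0 <= (T - Y - (P - Q) ^+ 2) * (p ^+ 2 + q ^+ 2 + r).
  apply: mulr_ge0; first by lra.
  by rewrite !addr_ge0 ?sqr_ge0.
have h2 : 0 <= (Y - 2 * P * Q) * (p - q) ^+ 2 by rewrite mulr_ge0 ?sqr_ge0 ?subr_ge0.
have h3 : 0 <= (P - Q) ^+ 2 * r by rewrite mulr_ge0 ?sqr_ge0.
by rewrite !addr_ge0 ?sqr_ge0.
Qed.

Lemma seq_ineq {R : realFieldType} {I : Type} (s : seq I) (p q r : I -> R) :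
  (forall g, 0 <= p g) -> (forall g, 0 <= q g) -> (forall g, 0 <= r g) ->
  (0 < size s)%N ->
  [/\ 2 * (\prod_(g <- s) p g) * (\prod_(g <- s) q g) <= \prod_(g <- s) (r g + 2 * p g * q g),
      0 <= \prod_(g <- s) (r g + 2 * p g * q g) &
      \prod_(g <- s) (r g + 2 * p g * q g) + (\prod_(g <- s) p g - \prod_(g <- s) q g) ^+ 2
      <= \prod_(g <- s) (p g ^+ 2 + q g ^+ 2 + r g)].
Proof.
move=> p0 q0 r0; elim: s => [//|a s IH] _.
have pq0 : 0 <= p a * q a by rewrite mulr_ge0.
case: s IH => [|b s] IH.
  rewrite !big_cons !big_nil !mulr1; split.
  - by rewrite -mulrA lerDr.
  - by rewrite addr_ge0 // -mulrA mulr_ge0.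
  - by rewrite le_eqVlt; apply/orP; left; apply/eqP; ring.
have [h1 h2 h3] := IH isT.
have P0 : 0 <= \prod_(g <- b :: s) p g by elim: (b :: s) => [|x t IHt]; rewrite ?big_nil ?big_cons ?mulr_ge0.
have Q0 : 0 <= \prod_(g <- b :: s) q g by elim: (b :: s) => [|x t IHt]; rewrite ?big_nil ?big_cons ?mulr_ge0.
move: (b :: s) h1 h2 h3 P0 Q0 => t h1 h2 h3 P0 Q0.
rewrite !big_cons.
set P := \prod_(g <- t) p g in h1 h2 h3 P0 Q0 *.
set Q := \prod_(g <- t) q g in h1 h2 h3 P0 Q0 *.
set Y := \prod_(g <- t) _ in h1 h2 h3 *.
set T := \prod_(g <- t) _ in h1 h2 h3 *.
split.
- have : 2 * P * Q * (p a * q a) <= Y * (p a * q a) by rewrite ler_wpM2r.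
  have : Y * (p a * q a) <= Y * (r a + 2 * p a * q a).
    apply: ler_wpM2l => //.
    have : 0 <= r a by [].
    have : 0 <= p a * q a by [].
    rewrite -mulrA; lra.
  move=> hb ha.
  have -> : 2 * (p a * P) * (q a * Q) = 2 * P * Q * (p a * q a) by ring.
  by rewrite [X in _ <= X]mulrC; apply: le_trans ha hb.
- by rewrite mulr_ge0 // addr_ge0 // -mulrA mulr_ge0.
- rewrite mulrC [X in _ <= X]mulrC [p a * P]mulrC [q a * Q]mulrC.
  exact: step_ineq.
Qed.

Lemma scalar_main (R : realFieldType) (m : nat) (p q r : 'I_m -> R) (alpha X : R) :
  (2 <= m)%N -> (forall g, 0 <= p g) -> (forall g, 0 <= q g) -> (forall g, 0 <= r g) ->
  \prod_g (p g ^+ 2 + q g ^+ 2 + r g) = 1 ->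
  X <= \prod_g (r g + 2 * p g * q g) -> 0 < alpha ->
  alpha * ((\prod_g p g) ^+ 2 + (\prod_g q g) ^+ 2) + X
    <= Num.max alpha (alpha / 2 ^+ (m - 1) + 1).
Proof.
move=> m2 p0 q0 r0 hT hX a0.
have sz : (0 < size (index_enum 'I_m))%N.
  have -> : size (index_enum 'I_m) = m by rewrite -[RHS]card_ord cardT enumT.
  by case: m {p q r p0 q0 r0 hT hX} m2.
have [h1 h2 h3] := seq_ineq (index_enum 'I_m) p q r p0 q0 r0 sz.
rewrite hT in h3.
set P := \prod_g p g in h1 h3 *.
set Q := \prod_g q g in h1 h3 *.
set Y := \prod_g _ in h1 h2 h3 hX.
have P0 : 0 <= P by apply: prodr_ge0.
have Q0 : 0 <= Q by apply: prodr_ge0.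
have hm : 2 ^+ m * P * Q <= Y.
  have -> : 2 ^+ m * P * Q = \prod_g (2 * p g * q g).
    by rewrite big_split big_split /= prodr_const card_ord.
  apply: ler_prod => g _; rewrite !mulr_ge0 //=; have := r0 g; lra.
set c : R := 2 ^+ (m - 1).
have c0 : 0 < c by rewrite exprn_gt0.
have em : 2 ^+ m = 2 * c :> R by rewrite /c -exprS; by case: (m) m2 => //= m' _; rewrite subn1.
set d := c^-1.
have cd : c * d = 1 by rewrite mulfV // gt_eqF.
have d0 : 0 < d by rewrite invr_gt0.
have hPQ : 2 * P * Q <= Y * d.
  have : 2 ^+ m * P * Q * d <= Y * d by rewrite ler_wpM2r // ltW.
  have -> : 2 ^+ m * P * Q * d = 2 * P * Q * (c * d) by rewrite em; ring.
  by rewrite cd mulr1.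
have hS : P ^+ 2 + Q ^+ 2 <= 1 - Y + Y * d.
  have -> : P ^+ 2 + Q ^+ 2 = (P - Q) ^+ 2 + 2 * P * Q by ring.
  lra.
have hY1 : Y <= 1 by have := sqr_ge0 (P - Q); lra.
have haS : alpha * (P ^+ 2 + Q ^+ 2) <= alpha * (1 - Y + Y * d) by rewrite ler_wpM2l // ltW.
rewrite -/d.
case: (lerP (1 - alpha + alpha * d) 0) => hK.
- rewrite le_max; apply/orP; left.
  have : Y * (1 - alpha + alpha * d) <= 0 by rewrite mulr_ge0_le0.
  lra.
- rewrite le_max; apply/orP; right.
  have : (1 - Y) * (1 - alpha + alpha * d) >= 0 by rewrite mulr_ge0 // ?subr_ge0 // ltW.
  lra.
Qed.

Lemma bits_nat_inj (n a b : nat) : (a < 2 ^ n)%N -> (b < 2 ^ n)%N ->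
  (forall k, (k < n)%N -> odd (a %/ 2 ^ k)%N = odd (b %/ 2 ^ k)%N) -> a = b.
Proof.
elim: n a b => [|n IH] a b.
  by rewrite expn0 !ltnS !leqn0 => /eqP -> /eqP ->.
move=> hi hj h.
have h0 := h 0%N isT; rewrite !expn0 !divn1 in h0.
have e : (a %/ 2 = b %/ 2)%N.
  apply: IH.
  - by rewrite ltn_divLR // -expnSr.
  - by rewrite ltn_divLR // -expnSr.
  move=> k hk; rewrite -!divnMA -expnS; exact: h.
by rewrite -[a]odd_double_half -[b]odd_double_half h0 -!divn2 e.
Qed.

Definition bits (n : nat) (i : 'I_(2 ^ n)) : {ffun 'I_n -> bool} := [ffun k => qbit i k].

Lemma bits_bij n : bijective (@bits n).
Proof.
apply: inj_card_bij.
  move=> i j /ffunP h; apply: val_inj; apply: bits_nat_inj (ltn_ord i) (ltn_ord j) _.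
  move=> k hk; have := h (Ordinal hk); rewrite !ffunE; done.
by rewrite card_ffun card_bool card_ord !card_ord.
Qed.

Definition mask n m (part : 'I_n -> 'I_m) (g : 'I_m) (x : {ffun 'I_n -> bool}) :
  {ffun 'I_n -> bool} := [ffun k => (part k == g) && x k].

Arguments mask {n m}.

Lemma maskK n m part g x : @mask n m part g (mask part g x) = mask part g x.
Proof. by apply/ffunP => k; rewrite !ffunE andbA andbb. Qed.

Lemma factor (K : comNzRingType) n m (part : 'I_n -> 'I_m)
    (G : 'I_m -> {ffun 'I_n -> bool} -> K) :
  (forall g x, G g x = G g (mask part g x)) ->
  \sum_x \prod_g G g x = \prod_g \sum_(y | mask part g y == y) G g y.
Proof.
move=> hG.
rewrite bigA_distr_big_dep /=.
pose h (x : {ffun 'I_n -> bool}) : {ffun 'I_m -> {ffun 'I_n -> bool}} :=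
  [ffun g => mask part g x].
pose h' (f : {ffun 'I_m -> {ffun 'I_n -> bool}}) : {ffun 'I_n -> bool} :=
  [ffun k => f (part k) k].
rewrite (reindex_onto h h').
  apply: eq_big => x.
    apply/esym/andP; split.
      apply/familyP => g; by rewrite /h ffunE unfold_in maskK.
    by apply/eqP/ffunP => k; rewrite /h' /h !ffunE eqxx.
  by move=> _; apply: eq_bigr => g _; rewrite /h ffunE -hG.
move=> f /familyP hf; apply/ffunP => g; rewrite /h ffunE; apply/ffunP => k.
rewrite /mask /h' !ffunE.
case: eqP => [<- //|ne].
have := hf g; move=> /eqP <-; rewrite ffunE.
by case: eqP ne.
Qed.

Definition bz n : {ffun 'I_n -> bool} := [ffun _ => false].
Definition bo n : {ffun 'I_n -> bool} := [ffun _ => true].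
Definition bneg n (x : {ffun 'I_n -> bool}) : {ffun 'I_n -> bool} := [ffun k => ~~ x k].
Arguments bneg {n}.

Lemma group_bound (R : realFieldType) n m (part : 'I_n -> 'I_m) (g : 'I_m)
    (b : {ffun 'I_n -> bool} -> R) :
  (exists k, part k = g) -> (forall y, 0 <= b y) ->
  let S := fun y => mask part g y == y in
  let N := \sum_(y | S y) b y ^+ 2 in
  let p := b (bz n) in let q := b (mask part g (bo n)) in
  p ^+ 2 + q ^+ 2 <= N /\
  \sum_(y | S y) b (mask part g (bneg y)) * b y <= N - p ^+ 2 - q ^+ 2 + 2 * p * q.
Proof.
move=> [k0 hk0] b0 S N p q.
set st := fun y => mask part g (bneg y).
have Sz : S (bz n) by apply/eqP/ffunP => k; rewrite !ffunE andbF.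
have Sq : S (mask part g (bo n)) by apply/eqP; rewrite maskK.
have nzq : mask part g (bo n) != bz n.
  apply/eqP => /ffunP /(_ k0); rewrite !ffunE hk0 eqxx.
  done.
have stz : st (bz n) = mask part g (bo n) by apply/ffunP => k; rewrite !ffunE.
have stq : st (mask part g (bo n)) = bz n.
  by apply/ffunP => k; rewrite !ffunE; case: (part k == g).
have hre : \sum_(y | S y) b (st y) ^+ 2 = N.
  rewrite /N [RHS](reindex_onto st st).
    apply: eq_bigl => y; rewrite /S /st maskK eqxx /=.
    have -> : mask part g (bneg (mask part g (bneg y))) = mask part g y.
      by apply/ffunP => k; rewrite !ffunE; case: (part k == g) => //=; rewrite negbK.
    done.
  move=> y /eqP Sy; rewrite /st -[RHS]Sy; apply/ffunP => k.
  by rewrite !ffunE; case: (part k == g) => //=; rewrite negbK.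
have hsq : 2 * (p - q) ^+ 2 <= \sum_(y | S y) (b (st y) - b y) ^+ 2.
  rewrite (bigD1 (bz n)) //= (bigD1 (mask part g (bo n))) /=; last by rewrite Sq.
  rewrite stz stq -/p -/q.
  have : 0 <= \sum_(i | (S i && (i != bz n)) && (i != mask part g (bo n))) (b (st i) - b i) ^+ 2.
    by apply: sumr_ge0 => i _; rewrite sqr_ge0.
  have -> : (q - p) ^+ 2 = (p - q) ^+ 2 by ring.
  lra.
have hN : p ^+ 2 + q ^+ 2 <= N.
  rewrite /N (bigD1 (bz n)) //= (bigD1 (mask part g (bo n))) /=; last by rewrite Sq.
  have : 0 <= \sum_(i | (S i && (i != bz n)) && (i != mask part g (bo n))) b i ^+ 2.
    by apply: sumr_ge0 => i _; rewrite sqr_ge0.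
  rewrite -/p -/q; lra.
split => //.
have ex : \sum_(y | S y) (b (st y) - b y) ^+ 2
   = \sum_(y | S y) b (st y) ^+ 2 + N - 2 * \sum_(y | S y) b (st y) * b y.
  rewrite /N mulr_sumr -big_split /= -sumrB; apply: eq_bigr => y _; ring.
have : 0 <= (p - q) ^+ 2 by rewrite sqr_ge0.
move: hsq; rewrite ex hre.
have -> : (p - q) ^+ 2 = p ^+ 2 + q ^+ 2 - 2 * p * q by ring.
lra.
Qed.
Lemma trace_pure (C : numClosedFieldType) n (A : 'M[C]_(2 ^ n)) (psi : 'cV[C]_(2 ^ n)) :
  \tr ((psi *m adj psi) *m A) = \sum_k \sum_j (psi j 0)^* * A j k * psi k 0.
Proof.
rewrite -mulmxA mxtrace_mulC /mxtrace big_ord1 !mxE.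
apply: eq_bigr => k _; rewrite !mxE mulr_suml; apply: eq_bigr => j _.
by rewrite /adj !mxE.
Qed.

Lemma prod_nat (K : comNzRingType) (I : finType) (b : I -> bool) :
  \prod_i ((b i)%:R : K) = ([forall i, b i])%:R.
Proof.
case: (boolP [forall i, b i]) => [/forallP H | /forallPn [j Hj]].
  by rewrite big1 // => i _; rewrite H.
by rewrite (bigD1 j) //= (negbTE Hj) mul0r.
Qed.

Lemma sum_ind (K : comNzRingType) (T : finType) (a : T) (F : T -> K) :
  \sum_y F y * (y == a)%:R = F a.
Proof.
rewrite (bigD1 a) //= eqxx mulr1 big1 ?addr0 // => y /negbTE ->; by rewrite mulr0.
Qed.

Lemma nat_and (K : comNzRingType) (a b : bool) : ((a && b)%:R : K) = a%:R * b%:R.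
Proof. by case: a; case: b; rewrite /= ?mulr0 ?mulr1. Qed.

Lemma forall_bz n (x y : {ffun 'I_n -> bool}) :
  [forall k, ~~ y k && ~~ x k] = (y == bz n) && (x == bz n).
Proof.
apply/forallP/andP => [H | [/eqP -> /eqP ->] k]; last by rewrite ffunE.
by split; apply/eqP/ffunP => k; have /andP[hy hx] := H k; rewrite ffunE; apply/negbTE.
Qed.

Lemma forall_bo n (x y : {ffun 'I_n -> bool}) :
  [forall k, y k && x k] = (y == bo n) && (x == bo n).
Proof.
apply/forallP/andP => [H | [/eqP -> /eqP ->] k]; last by rewrite ffunE.
by split; apply/eqP/ffunP => k; have /andP[hy hx] := H k; rewrite ffunE.
Qed.

Lemma forall_bneg n (x y : {ffun 'I_n -> bool}) :
  [forall k, y k != x k] = (y == bneg x).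
Proof.
apply/forallP/eqP => [H | -> k]; last by rewrite ffunE; case: (x k).
by apply/ffunP => k; have := H k; rewrite ffunE; case: (y k); case: (x k).
Qed.

Lemma trace_bits (C : numClosedFieldType) n (alpha : C) (psi : 'cV[C]_(2 ^ n))
    (idx : {ffun 'I_n -> bool} -> 'I_(2 ^ n)) :
  cancel idx (@bits n) -> cancel (@bits n) idx ->
  \tr ((psi *m adj psi) *m Wse n alpha) =
  alpha * ((psi (idx (bz n)) 0)^* * psi (idx (bz n)) 0
           + (psi (idx (bo n)) 0)^* * psi (idx (bo n)) 0)
  + \sum_x (psi (idx (bneg x)) 0)^* * psi (idx x) 0.
Proof.
move=> Kb bK.
have bij : {on [pred i | true], bijective idx}.
  by apply: onW_bij; exists (@bits n).
have qb : forall x k, qbit (idx x) k = x k.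
  by move=> x k; rewrite -[in RHS](Kb x) ffunE.
have Went : forall x y, Wse n alpha (idx y) (idx x) =
   alpha * (((y == bz n) && (x == bz n))%:R + ((y == bo n) && (x == bo n))%:R)
   + (y == bneg x)%:R.
  move=> x y; rewrite /Wse /MZ /MX !mxE.
  have e0 : \prod_(k < n) proj0 C (qbit (idx y) k) (qbit (idx x) k) = ((y == bz n) && (x == bz n))%:R.
    by rewrite -forall_bz -prod_nat; apply: eq_bigr => k _; rewrite !qb.
  have e1 : \prod_(k < n) proj1 C (qbit (idx y) k) (qbit (idx x) k) = ((y == bo n) && (x == bo n))%:R.
    by rewrite -forall_bo -prod_nat; apply: eq_bigr => k _; rewrite !qb.
  have e2 : \prod_(k < n) sigma_x C (qbit (idx y) k) (qbit (idx x) k) = (y == bneg x)%:R.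
    by rewrite -forall_bneg -prod_nat; apply: eq_bigr => k _; rewrite !qb.
  by rewrite e0 e1 e2.
rewrite trace_pure (reindex idx) //=.
under eq_bigr => x _ do rewrite (reindex idx) //=.
set phi := fun x => psi (idx x) 0.
have inner : forall x, \sum_y (psi (idx y) 0)^* * Wse n alpha (idx y) (idx x) * psi (idx x) 0
  = \sum_y (alpha * ((phi y)^* * phi x) * (x == bz n)%:R) * (y == bz n)%:R
  + \sum_y (alpha * ((phi y)^* * phi x) * (x == bo n)%:R) * (y == bo n)%:R
  + \sum_y ((phi y)^* * phi x) * (y == bneg x)%:R.
  move=> x; rewrite -!big_split; apply: eq_bigr => y _.
  rewrite Went !nat_and /phi /=; ring.
under eq_bigr => x _ do rewrite inner !sum_ind.
rewrite !big_split /= !sum_ind /phi; ring.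
Qed.

Definition ar (R : realType) (z : R[i]) : R := complex.Re `|z|.
Arguments ar {R}.

Lemma ar_C (R : realType) (z : R[i]) : (ar z)%:C%C = `|z|.
Proof. by rewrite /ar RRe_real // normr_real. Qed.

Lemma ar_ge0 (R : realType) (z : R[i]) : 0 <= ar z.
Proof. by rewrite -ler0c ar_C. Qed.

Lemma ar_mul (R : realType) (z w : R[i]) : ar (z * w) = ar z * ar w.
Proof. by apply: (@complexI R); rewrite rmorphM /= !ar_C normrM. Qed.

Lemma ar_conj (R : realType) (z : R[i]) : ar (z^*) = ar z.
Proof. by apply: (@complexI R); rewrite !ar_C norm_conjC. Qed.

Lemma ar_prod (R : realType) (I : finType) (F : I -> R[i]) :
  ar (\prod_i F i) = \prod_i ar (F i).
Proof. by apply: (@complexI R); rewrite rmorph_prod /= ar_C normr_prod; apply: eq_bigr => i _; rewrite ar_C. Qed.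

Lemma ar_sq (R : realType) (z : R[i]) : z^* * z = ((ar z) ^+ 2)%:C%C.
Proof. by rewrite rmorphXn /= ar_C normCKC. Qed.

Lemma rcD (R : realType) (a b : R) : (a + b)%:C%C = a%:C%C + b%:C%C :> R[i].
Proof. by rewrite (rmorphD (real_complex R)). Qed.
Lemma rcM (R : realType) (a b : R) : (a * b)%:C%C = a%:C%C * b%:C%C :> R[i].
Proof. by rewrite (rmorphM (real_complex R)). Qed.

Lemma rcX (R : realType) (a : R) k : (a ^+ k)%:C%C = (a%:C%C) ^+ k :> R[i].
Proof. by rewrite (rmorphXn (real_complex R)). Qed.
Lemma rcsum (R : realType) (I : finType) (P : pred I) (F : I -> R) :
  (\sum_(i | P i) F i)%:C%C = \sum_(i | P i) (F i)%:C%C :> R[i].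
Proof. by rewrite (rmorph_sum (real_complex R)). Qed.
Lemma rcprod (R : realType) (I : finType) (P : pred I) (F : I -> R) :
  (\prod_(i | P i) F i)%:C%C = \prod_(i | P i) (F i)%:C%C :> R[i].
Proof. by rewrite (rmorph_prod (real_complex R)). Qed.
Lemma rc1 (R : realType) : (1 : R)%:C%C = 1 :> R[i].
Proof. by []. Qed.

Lemma bnegK n : involutive (@bneg n).
Proof. by move=> x; apply/ffunP => k; rewrite !ffunE negbK. Qed.

Lemma Xs_real {C : numClosedFieldType} {n} (h : {ffun 'I_n -> bool} -> C) :
  (\sum_x (h (bneg x))^* * h x) \is Num.real.
Proof.
apply/CrealP; rewrite rmorph_sum (reindex_inj (inv_inj (@bnegK n))) /=.
by apply: eq_bigr => x _; rewrite bnegK rmorphM /= conjCK mulrC.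
Qed.

Lemma pure_bound (R : realType) n m (alpha : R) (psi : 'cV[R[i]]_(2 ^ n)) :
  (2 <= m)%N -> 0 < alpha -> m_separable_pure m psi ->
  \tr ((psi *m adj psi) *m Wse n alpha%:C%C)
    <= (Num.max alpha (alpha / 2 ^+ (m - 1) + 1))%:C%C.
Proof.
move=> m2 a0 [pure [part [f [hcov [hdep hprod]]]]].
have [idx bK Kb] := bits_bij n.
have qb : forall x k, qbit (idx x) k = x k by move=> x k; rewrite -[in RHS](Kb x) ffunE.
pose F g x := f g (idx x).
have hF : forall g x, F g x = F g (mask part g x).
  by move=> g x; apply: hdep => k hk; rewrite !qb ffunE hk eqxx.
have hphi : forall x, psi (idx x) 0 = \prod_g F g x by move=> x; rewrite hprod.
have XR := Xs_real (fun x : {ffun 'I_n -> bool} => psi (idx x) 0).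
rewrite (trace_bits _ _ _ _ _ Kb bK).
move: XR; rewrite !hphi => XR.
rewrite !ar_sq !ar_prod.
set pr := fun g => ar (F g (bz n)).
set qr := fun g => ar (F g (mask part g (bo n))).
have eq1 : \prod_g ar (F g (bo n)) = \prod_g qr g by apply: eq_bigr => g _; rewrite /qr -hF.
rewrite eq1 -/(pr _).
set Xs := \sum_x _.
pose Nr g := \sum_(y | mask part g y == y) ar (F g y) ^+ 2.
pose rr g := Nr g - pr g ^+ 2 - qr g ^+ 2.
have gb : forall g, pr g ^+ 2 + qr g ^+ 2 <= Nr g /\
    \sum_(y | mask part g y == y) ar (F g (mask part g (bneg y))) * ar (F g y)
      <= Nr g - pr g ^+ 2 - qr g ^+ 2 + 2 * pr g * qr g.
  move=> g; have := (@group_bound _ _ _ part g (fun y => ar (F g y)) (hcov g) (fun y => ar_ge0 _ _)). move=> /= H. exact H.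
have hN : \prod_g (pr g ^+ 2 + qr g ^+ 2 + rr g) = 1.
  have -> : \prod_g (pr g ^+ 2 + qr g ^+ 2 + rr g) = \prod_g Nr g.
    by apply: eq_bigr => g _; rewrite /rr; ring.
  rewrite /Nr -(@factor _ n m part (fun g y => ar (F g y) ^+ 2)); last first.
    by move=> g x /=; rewrite -hF.
  under eq_bigr => x _ do rewrite prodrXl -ar_prod -hphi.
  apply: (@complexI R); rewrite rcsum rc1.
  move: pure; rewrite /pure_state => <-.
  rewrite [RHS](reindex idx) /=; last by apply: onW_bij; exists (@bits n).
  by apply: eq_bigr => x _; rewrite rcX ar_C.
have hXb : Xs <= (\prod_g (rr g + 2 * pr g * qr g))%:C%C.
  apply: le_trans (real_ler_norm XR) _.
  have eX : Xs = \prod_g \sum_(y | mask part g y == y) (F g (bneg y))^* * F g y.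
    rewrite /Xs -(@factor _ n m part (fun g y => (F g (bneg y))^* * F g y)); last first.
      move=> g x /=; rewrite [F g x]hF [F g (bneg x)]hF [F g (bneg (mask part g x))]hF.
      congr ((F g _)^* * _); apply/ffunP => k; rewrite !ffunE.
      by case: (part k == g).
    apply: eq_bigr => x _; rewrite !hphi rmorph_prod -big_split.
    done.
  rewrite -/Xs eX normr_prod rcprod; apply: ler_prod => g _; rewrite normr_ge0 /=.
  apply: le_trans (ler_norm_sum _ _ _) _.
  have -> : \sum_(y | mask part g y == y) `|(F g (bneg y))^* * F g y|
     = (\sum_(y | mask part g y == y) ar (F g (mask part g (bneg y))) * ar (F g y))%:C%C.
    rewrite rcsum; apply: eq_bigr => y _; rewrite normrM norm_conjC rcM !ar_C -hF.
    done.
  rewrite lecR; case: (gb g) => _ h; rewrite /rr; lra.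
apply: (le_trans (y := (alpha * ((\prod_g pr g) ^+ 2 + (\prod_g qr g) ^+ 2)
                        + \prod_g (rr g + 2 * pr g * qr g))%:C%C)).
  by rewrite rcD rcM rcD lerD2l.
rewrite lecR; apply: (@scalar_main _ m pr qr rr) => //.
- by move=> g; apply: ar_ge0.
- by move=> g; apply: ar_ge0.
- by move=> g; rewrite /rr; case: (gb g) => + _; lra.
Qed.

Local Open Scope complex_scope.

Theorem mainTheorem1 (R : realType) (n m : nat) (alpha : R)
    (rho : 'M[R[i]]_(2 ^ n)) :
  (2 <= n)%N -> (2 <= m)%N -> (m <= n)%N ->
  0 < alpha -> alpha <= 2 ->
  m_separable m rho ->
  \tr (rho *m Wse n alpha%:C) <=
    (Num.max alpha (alpha / 2 ^+ (m - 1) + 1))%:C.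
Proof.
move=> n2 m2 mn a0 a2 [N [w [psi [w0 [ws [hps ->]]]]]].
rewrite mulmx_suml raddf_sum.
under eq_bigr => j _ do rewrite /= -scalemxAl mxtraceZ.
apply: (le_trans (y := \sum_(j < N) w j * (Num.max alpha (alpha / 2 ^+ (m - 1) + 1))%:C)).
  apply: ler_sum => j _; apply: ler_wpM2l; first exact: w0.
  exact: pure_bound.
by rewrite -mulr_suml ws mul1r.
Qed.
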